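(* Let $C$ and $D$ be $R$-linear codes of length $n$, let $\eta$ be a bi-composition of $n$, and let $r,s$ be the compositions of $n$ given by \[ r_i=\sum_{\beta\in R}\eta_{\omega_i\beta},\qquad s_i=\sum_{\alpha\in R}\eta_{\alpha\omega_i}. \] Let $B^{C',D}_{r,s,\eta}$ be the number of pairs $(u,v)\in C'\times D$ with $\mathrm{comp}(u)=r$, $\mathrm{comp}(v)=s$ and $\eta(u,v)=\eta$. Then \[ \sum_{\sigma\in S_n}B^{C^\sigma,D}_{r,s,\eta}=A_r^C\,A_s^D\,\prod_{i=0}^{|R|-1}r_i!\;\prod_{i=0}^{|R|-1}\frac{s_i!}{\prod_{j=0}^{|R|-1}\eta_{\omega_j\omega_i}!}. \]
   Context: $R$ denotes $\mathbb F_q$ or $\mathbb Z_k$ ($k\ge 2$), with elements in a fixed order $0=\omega_0,\dots,\omega_{|R|-1}$. An $R$-linear code of length $n$ is an $\mathbb F_q$-subspace of $\mathbb F_q^n$, respectively an additive subgroup of $\mathbb Z_k^n$. For $u\in R^n$, $\mathrm{comp}(u)=(s_0(u),\dots,s_{|R|-1}(u))$, where $s_i(u)$ is the number of coordinates equal to $\omega_i$. $A_s^C=\#\{u\in C:\mathrm{comp}(u)=s\}$. For $u,v\in R^n$, $\eta(u,v)$ is the vector with components $\eta_{\alpha\beta}(u,v)=\#\{i:(u_i,v_i)=(\alpha,\beta)\}$ for $(\alpha,\beta)\in R^2$. A bi-composition of $n$ is a family of non-negative integers $\eta_{\alpha\beta}$, $(\alpha,\beta)\in R^2$, summing to $n$.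 For $\sigma\in S_n$, $u^\sigma=(u_{\sigma(1)},\dots,u_{\sigma(n)})$ and $C^\sigma=\{u^\sigma:u\in C\}$. *)

(* Defs.v *)
From HB Require Import structures.
From mathcomp Require Import all_boot all_order all_algebra all_fingroup.
Set Implicit Arguments. Unset Strict Implicit. Unset Printing Implicit Defensive.
Import GRing.Theory.
Local Open Scope ring_scope.

(* Words of length n over the alphabet R are row vectors 'rV[R]_n;
   the i-th coordinate of u is u ord0 i. *)

Definition comp (R : finType) (n : nat) (u : 'rV[R]_n) : {ffun R -> nat} :=
  [ffun a => #|[set i : 'I_n | u ord0 i == a]|].

Definition bicomp (R : finType) (n : nat) (u v : 'rV[R]_n) : {ffun R * R -> nat} :=
  [ffun ab => #|[set i : 'I_n | (u ord0 i, v ord0 i) == ab]|].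

Definition Acount (R : finType) (n : nat) (C : {set 'rV[R]_n}) (s : {ffun R -> nat}) : nat :=
  #|[set u in C | comp u == s]|.

Definition permw (R : finType) (n : nat) (sigma : 'S_n) (u : 'rV[R]_n) : 'rV[R]_n :=
  \row_i u ord0 (sigma i).
Definition permcode (R : finType) (n : nat) (sigma : 'S_n) (C : {set 'rV[R]_n})
  : {set 'rV[R]_n} := [set permw sigma u | u in C].

Definition Bcount (R : finType) (n : nat) (C' D : {set 'rV[R]_n})
  (r s : {ffun R -> nat}) (eta : {ffun R * R -> nat}) : nat :=
  #|[set p : 'rV[R]_n * 'rV[R]_n |
      [&& p.1 \in C', p.2 \in D, comp p.1 == r, comp p.2 == s & bicomp p.1 p.2 == eta]]|.

Definition is_bicomposition (R : finType) (n : nat) (eta : {ffun R * R -> nat}) : Prop :=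
  (\sum_(ab : R * R) eta ab)%N = n.

Definition rowcomp (R : finType) (eta : {ffun R * R -> nat}) : {ffun R -> nat} :=
  [ffun a => (\sum_(b : R) eta (a, b))%N].
Definition colcomp (R : finType) (eta : {ffun R * R -> nat}) : {ffun R -> nat} :=
  [ffun b => (\sum_(a : R) eta (a, b))%N].

Definition identity_holds (R : finType) (n : nat) (C D : {set 'rV[R]_n})
  (eta : {ffun R * R -> nat}) : Prop :=
  let r := rowcomp eta in
  let s := colcomp eta in
  ((\sum_(sigma : 'S_n) Bcount (permcode sigma C) D r s eta)%N%:R : rat)
  = (Acount C r)%:R * (Acount D s)%:R
    * (\prod_(a : R) ((r a)`!)%:R)
    * (\prod_(b : R) (((s b)`!)%:R / (\prod_(a : R) ((eta (a, b))`!)%:R))).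

Definition Fq_linear (F : finFieldType) (n : nat) (C : {set 'rV[F]_n}) : Prop :=
  0 \in C /\ forall (a : F) (u v : 'rV[F]_n), u \in C -> v \in C -> a *: u + v \in C.

Definition Zk_linear (k n : nat) (C : {set 'rV['Z_k]_n}) : Prop :=
  0 \in C /\ forall u v : 'rV['Z_k]_n, u \in C -> v \in C -> u - v \in C.

(* Main.v *)
Require Import Defs.
From mathcomp Require Import all_boot all_order all_algebra all_fingroup.
Set Implicit Arguments. Unset Strict Implicit. Unset Printing Implicit Defensive.

Section Stab.
Variables (X T : finType) (f : X -> T).

Definition fib (t : T) : {set X} := [set x | f x == t].

Definition psif (g : {ffun T -> {perm X}}) : {ffun X -> X} := [ffun x => g (f x) x].
Definition psi g : {perm X} := insubd (1%g : {perm X}) (psif g).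

Definition famP := family (fun t => mem (perm_on (fib t))).

Lemma fam_f g : g \in famP -> forall x, f (g (f x) x) = f x.
Proof.
move=> /familyP gF x; have := perm_closed x (gF (f x)).
by rewrite !inE eqxx => /eqP.
Qed.

Lemma psiE g : g \in famP -> forall x, psi g x = g (f x) x.
Proof.
move=> gF x; rewrite -pvalE /psi insubdK ?ffunE //.
apply/injectiveP => y z; rewrite !ffunE => e.
have ef : f y = f z by rewrite -(fam_f gF y) e fam_f.
by move: e; rewrite ef => /perm_inj.
Qed.

Definition restrf (s : {perm X}) t : {ffun X -> X} :=
  [ffun x => if f x == t then s x else x].
Definition restr s t : {perm X} := insubd (1%g : {perm X}) (restrf s t).

Lemma restrE (s : {perm X}) t : (forall x, f (s x) = f x) -> forall x,
  restr s t x = if f x == t then s x else x.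
Proof.
move=> sf x; rewrite -pvalE /restr insubdK ?ffunE //.
apply/injectiveP => y z; rewrite !ffunE.
case: ifP => hy; case: ifP => hz => e.
- exact: perm_inj e.
- by move: hz; rewrite -e sf hy.
- by move: hy; rewrite e sf hz.
- exact e.
Qed.

Lemma card_stab :
  #|[set s : {perm X} | [forall x, f (s x) == f x]]| = (\prod_t #|fib t|`!)%N.
Proof.
have -> : [set s : {perm X} | [forall x, f (s x) == f x]] = psi @: famP.
  apply/setP => s; rewrite inE; apply/forallP/imsetP => [sf|[g gF ->] x].
    have sf' : forall x, f (s x) = f x by move=> x; apply/eqP.
    exists [ffun t => restr s t].
      apply/familyP => t; rewrite ffunE; apply/subsetP => x.
      by rewrite !inE restrE //; case: ifP => // _; rewrite eqxx.
    apply/permP => x; rewrite psiE ?ffunE ?restrE ?eqxx //.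
    apply/familyP => t; rewrite ffunE; apply/subsetP => y.
    by rewrite !inE restrE //; case: ifP => // _; rewrite eqxx.
  by rewrite psiE // fam_f.
rewrite card_in_imset; last first.
  move=> g h gF hF e; apply/ffunP => t; apply/permP => x.
  case: (eqVneq (f x) t) => [<-|ne].
    by rewrite -psiE // e psiE.
  have xn : x \notin fib t by rewrite inE ne.
  move/familyP: gF => /(_ t) gF; move/familyP: hF => /(_ t) hF.
  by rewrite (out_perm gF xn) (out_perm hF xn).
rewrite card_family.
have fm : forall (G : T -> nat) s, foldr muln 1 (map G s) = (\prod_(x <- s) G x)%N.
  by move=> G; elim=> [|t s IH]; rewrite ?big_nil // big_cons /= IH.
rewrite fm big_enum /=; apply: eq_bigr => t _; exact: card_perm.
Qed.
End Stab.

Lemma cnt (m : nat) (T : eqType) (f : 'I_m -> T) c :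
  count_mem c [seq f i | i <- enum 'I_m] = #|[set i | f i == c]|.
Proof.
rewrite count_map cardsE cardE /enum_mem size_filter count_filter.
by apply: eq_count => i /=; rewrite /= andbT.
Qed.

Section Words.
Variables (T : finType) (n : nat).
Implicit Types (u x : 'rV[T]_n) (s t : 'S_n).

Lemma permwM s t u : permw (s * t)%g u = permw s (permw t u).
Proof. by apply/rowP => i; rewrite !mxE permM. Qed.

Lemma permw1 u : permw 1%g u = u.
Proof. by apply/rowP => i; rewrite !mxE perm1. Qed.

Lemma permw_inj s : injective (@permw T n s).
Proof.
move=> u v e; rewrite -(permw1 u) -(permw1 v) -(mulVg s) !permwM.
by rewrite e.
Qed.

Lemma card_predperm s (P : pred 'I_n) : #|[set i | P (s i)]| = #|[set i | P i]|.
Proof.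
rewrite -(card_preimset [set i | P i] (@perm_inj _ s)); apply: eq_card => i.
by rewrite !inE.
Qed.

Lemma comp_permw s u : Defs.comp (permw s u) = Defs.comp u.
Proof.
apply/ffunP => a; rewrite !ffunE.
rewrite -(card_predperm s (fun i => u ord0 i == a)).
by apply: eq_card => i; rewrite !inE mxE.
Qed.

Lemma stab_word u :
  #|[set s : 'S_n | permw s u == u]| = (\prod_a (Defs.comp u a)`!)%N.
Proof.
rewrite (_ : \prod_a _ = \prod_a #|fib (fun i : 'I_n => u ord0 i) a|`!)%N; last first.
  by apply: eq_bigr => a _; rewrite ffunE.
rewrite -card_stab; apply: eq_card => s; rewrite !inE.
apply/eqP/forallP => [e i|e]; first by rewrite -{2}e mxE.
by apply/rowP => i; rewrite mxE; apply/eqP.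
Qed.
Lemma orbit_word u x : Defs.comp x = Defs.comp u -> exists s, x = permw s u.
Proof.
move=> ec.
pose sx := [tuple x ord0 i | i < n]; pose tu := [tuple u ord0 i | i < n].
have pe : perm_eq sx tu.
  apply/allP => c _ /=; rewrite !cnt.
  by move/ffunP: ec => /(_ c); rewrite !ffunE => ->.
case/tuple_permP: pe => p ep; exists p; apply/rowP => i.
have : sx = [tuple tnth tu (p i) | i < n] by apply: val_inj.
move/(congr1 (fun tp => tnth tp i)); rewrite !tnth_mktuple => ->.
by rewrite mxE.
Qed.

Lemma fiber_word u x : Defs.comp x = Defs.comp u ->
  #|[set s : 'S_n | permw s u == x]| = (\prod_a (Defs.comp u a)`!)%N.
Proof.
move=> /orbit_word [s0 ->]; rewrite -stab_word.
rewrite -(card_preimset _ (mulgI s0)); apply: eq_card => s; rewrite !inE.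
by rewrite permwM (inj_eq (@permw_inj s0)).
Qed.

Lemma orbit_count u :
  (#|[set x : 'rV[T]_n | Defs.comp x == Defs.comp u]| * \prod_a (Defs.comp u a)`! = n`!)%N.
Proof.
rewrite -card_Sn -[RHS]sum1_card (partition_big (fun s => permw s u) predT) //=.
rewrite (bigID (fun x => Defs.comp x == Defs.comp u)) /=.
rewrite [X in _ + X]big1 ?addn0; last first.
  move=> x /negP nx; apply: big1 => s /eqP e; exfalso.
  by apply: nx; rewrite -e comp_permw.
rewrite -sum_nat_const; apply: eq_big => [x|x]; first by rewrite inE.
rewrite inE => /eqP e.
by rewrite sum1dep_card -(fiber_word e); apply: eq_card => s; rewrite !inE.
Qed.

Lemma exists_word (a0 : T) (c : {ffun T -> nat}) :
  (\sum_t c t)%N = n -> exists u : 'rV[T]_n, Defs.comp u = c.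
Proof.
move=> sc.
pose zs := flatten [seq nseq (c a) a | a <- enum T].
have sz : size zs == n.
  rewrite size_flatten /shape -map_comp -sc sumnE big_map big_enum /=.
  by apply/eqP/eq_bigr => a _; rewrite /= size_nseq.
pose tz := Tuple sz.
exists (\row_i tnth tz i)%R; apply/ffunP => a; rewrite ffunE.
rewrite (eq_card (B := [set i | tnth tz i == a])); last by move=> i; rewrite !inE mxE.
rewrite -cnt map_tnth_enum /= count_flatten -map_comp sumnE big_map big_enum /=.
rewrite (bigD1 a) //= count_nseq /= eqxx mul1n big1 ?addn0 // => a' nt.
by rewrite /= count_nseq /= (negbTE nt).
Qed.
End Words.

Lemma cardsum (I : finType) (P : pred I) : #|[set i | P i]| = (\sum_i (P i : nat))%N.
Proof.
rewrite -sum1_card big_mkcond /=; apply: eq_bigr => i _; rewrite inE.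
by case: (P i).
Qed.

Lemma sum_orbit (T : finType) n (u : 'rV[T]_n) (F : 'rV[T]_n -> nat) :
  (\sum_(s : 'S_n) F (permw s u) =
   (\prod_a (Defs.comp u a)`!) * (\sum_(x | Defs.comp x == Defs.comp u) F x))%N.
Proof.
rewrite (partition_big (fun s => permw s u) predT) //=.
rewrite (bigID (fun x => Defs.comp x == Defs.comp u)) /=.
rewrite [X in _ + X]big1 ?addn0; last first.
  move=> x /negP nx; apply: big1 => s /eqP e; exfalso.
  by apply: nx; rewrite -e comp_permw.
rewrite big_distrr /=; apply: eq_bigr => x /eqP e.
rewrite (eq_bigr (fun _ => F x)); last by move=> s /eqP ->.
by rewrite sum_nat_const -(fiber_word e); congr (_ * _)%N; apply: eq_card => s; rewrite !inE.
Qed.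

Section Pairs.
Variables (R : finType) (n : nat).
Implicit Types (x y w v : 'rV[R]_n).

Definition zipw x y : 'rV[R * R]_n := (\row_i (x ord0 i, y ord0 i))%R.

Lemma bicomp_zip x y : bicomp x y = Defs.comp (zipw x y).
Proof. by apply/ffunP => ab; rewrite !ffunE; apply: eq_card => i; rewrite !inE mxE. Qed.

Lemma bicomp_permw (s : 'S_n) x y : bicomp (permw s x) (permw s y) = bicomp x y.
Proof.
rewrite !bicomp_zip -(comp_permw s (zipw x y)); congr Defs.comp.
by apply/rowP => i; rewrite !mxE.
Qed.

Lemma row_bicomp x y : rowcomp (bicomp x y) = Defs.comp x.
Proof.
apply/ffunP => a; rewrite !ffunE cardsum.
rewrite (eq_bigr (fun b => \sum_i (((x ord0 i, y ord0 i) == (a, b)) : nat)))%N; last first.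
  by move=> b _; rewrite ffunE cardsum.
rewrite exchange_big /=; apply: eq_bigr => i _.
rewrite (bigD1 (y ord0 i)) //= big1 ?addn0; first by rewrite xpair_eqE eqxx andbT.
by move=> b nb; rewrite xpair_eqE [y ord0 i == b]eq_sym (negbTE nb) andbF.
Qed.

Lemma col_bicomp x y : colcomp (bicomp x y) = Defs.comp y.
Proof.
apply/ffunP => b; rewrite !ffunE cardsum.
rewrite (eq_bigr (fun a => \sum_i (((x ord0 i, y ord0 i) == (a, b)) : nat)))%N; last first.
  by move=> a _; rewrite ffunE cardsum.
rewrite exchange_big /=; apply: eq_bigr => i _.
rewrite (bigD1 (x ord0 i)) //= big1 ?addn0; first by rewrite xpair_eqE eqxx.
by move=> a na; rewrite xpair_eqE [x ord0 i == a]eq_sym (negbTE na).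
Qed.
End Pairs.

Lemma N_eq (R : finType) n (a0 : R) (w v : 'rV[R]_n) (eta : {ffun R * R -> nat}) :
  (\sum_ab eta ab)%N = n -> Defs.comp w = rowcomp eta -> Defs.comp v = colcomp eta ->
  (#|[set s : 'S_n | bicomp (permw s w) v == eta]| * \prod_ab (eta ab)`! =
   (\prod_a (Defs.comp w a)`!) * (\prod_b (Defs.comp v b)`!))%N.
Proof.
move=> sE cw cv.
pose Ov (y : 'rV[R]_n) := (\sum_(x : 'rV[R]_n) (bicomp x y == eta : nat))%N.
have A : #|[set s : 'S_n | bicomp (permw s w) v == eta]| =
         ((\prod_a (Defs.comp w a)`!) * Ov v)%N.
  rewrite cardsum (sum_orbit w (fun x => (bicomp x v == eta : nat))); congr (_ * _)%N.
  rewrite big_mkcond; apply: eq_bigr => x _ /=.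
  case: (boolP (bicomp x v == eta)) => [/eqP e|]; last by case: ifP.
  by rewrite cw -e row_bicomp eqxx.
have Oinv (t : 'S_n) : Ov (permw t v) = Ov v.
  rewrite /Ov (reindex_inj (@permw_inj _ _ t)) /=; apply: eq_bigr => x _.
  by rewrite bicomp_permw.
have B : (\sum_(t : 'S_n) Ov (permw t v) = n`! * Ov v)%N.
  by rewrite (eq_bigr (fun _ => Ov v)) // sum_nat_const card_Sn.
have C : (\sum_(t : 'S_n) Ov (permw t v) = (\prod_b (Defs.comp v b)`!) * (\sum_y Ov y))%N.
  rewrite sum_orbit; congr (_ * _)%N.
  rewrite big_mkcond; apply: eq_bigr => y _ /=; case: ifP => // ny.
  apply/esym/big1 => x _; case: eqP => // e; exfalso.
  by rewrite cv -e col_bicomp eqxx in ny.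
have D : ((\sum_y Ov y) * \prod_ab (eta ab)`! = n`!)%N.
  have [z0 cz0] := exists_word (a0, a0) sE.
  rewrite -(orbit_count z0) cz0; congr (_ * _)%N.
  rewrite cardsum /Ov exchange_big /= pair_bigA /=.
  rewrite (reindex (fun z : 'rV[R * R]_n => ((\row_i (z ord0 i).1)%R, (\row_i (z ord0 i).2)%R))) /=.
    apply: eq_bigr => z _; rewrite bicomp_zip (_ : zipw _ _ = z) //.
    by apply/rowP => i; rewrite !mxE; case: (z ord0 i).
  exists (fun p => zipw p.1 p.2) => [z _|[x y] _].
    by apply/rowP => i; rewrite !mxE; case: (z ord0 i).
  by rewrite /=; congr (_, _); apply/rowP => i; rewrite !mxE.
have E : (Ov v * \prod_ab (eta ab)`! = \prod_b (Defs.comp v b)`!)%N.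
  apply/eqP; rewrite -(eqn_pmul2l (fact_gt0 n)) mulnA -B C -mulnA D mulnC.
  by [].
by rewrite A -mulnA E.
Qed.

Lemma nat_identity (R : finType) n (a0 : R) (C D : {set 'rV[R]_n})
  (eta : {ffun R * R -> nat}) :
  (\sum_ab eta ab)%N = n ->
  ((\sum_(sigma : 'S_n) Bcount (permcode sigma C) D (rowcomp eta) (colcomp eta) eta)
     * \prod_ab (eta ab)`! =
   Acount C (rowcomp eta) * Acount D (colcomp eta) *
   ((\prod_a (rowcomp eta a)`!) * (\prod_b (colcomp eta b)`!)))%N.
Proof.
move=> sE; set r := rowcomp eta; set s := colcomp eta.
set K := ((\prod_a (r a)`!) * (\prod_b (s b)`!))%N.
have Bc (sg : 'S_n) : Bcount (permcode sg C) D r s eta =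
  (\sum_(w in C) \sum_(y in D)
     ((Defs.comp w == r) && (Defs.comp y == s) && (bicomp (permw sg w) y == eta) : nat))%N.
  rewrite /Bcount cardsum.
  rewrite -(pair_bigA _ (fun u y => ([&& u \in permcode sg C, y \in D,
     Defs.comp u == r, Defs.comp y == s & bicomp u y == eta] : nat))) /=.
  rewrite (bigID (mem (permcode sg C))) /= [X in _ + X]big1 ?addn0; last first.
    by move=> u /negbTE un; apply: big1 => y _; rewrite un.
  rewrite big_imset /=; last by move=> u1 u2 _ _; apply: permw_inj.
  apply: eq_bigr => w wC; rewrite [RHS]big_mkcond /=; apply: eq_bigr => y _.
  rewrite /permcode imset_f // comp_permw.
  by case: (y \in D); rewrite //= !andbA.
rewrite (eq_bigr _ (fun sg _ => Bc sg)) exchange_big /=.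
rewrite big_distrl /=.
rewrite (eq_bigr (fun w => (Defs.comp w == r : nat) *
          \sum_(y in D) ((Defs.comp y == s : nat) * K)))%N; last first.
  move=> w wC; rewrite exchange_big /= big_distrl big_distrr /=.
  apply: eq_bigr => y yD.
  have [cw|ncw] := eqVneq (Defs.comp w) r; last first.
    by rewrite big1 // => sg _; rewrite (negbTE ncw).
  have [cy|ncy] := eqVneq (Defs.comp y) s; last first.
    by rewrite big1 // => sg _; rewrite (negbTE ncy) andbF.
  rewrite /= mul1n -cardsum; move: (N_eq a0 sE cw cy).
  by rewrite mul1n /K -cw -cy => ->.
rewrite -big_distrl -big_distrl /= mulnA.
rewrite /Acount !cardsum.
by congr (_ * _ * _)%N; rewrite big_mkcond /=; apply: eq_bigr => u _; case: (u \in _).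
Qed.

Import GRing.Theory Num.Theory.

Lemma gen_identity (R : finType) n (a0 : R) (C D : {set 'rV[R]_n})
  (eta : {ffun R * R -> nat}) :
  (\sum_ab eta ab)%N = n -> identity_holds C D eta.
Proof.
move=> sE; have := nat_identity a0 C D sE; rewrite /identity_holds.
set L := (\sum_(_ : 'S_n) _)%N; set A1 := Acount _ _; set A2 := Acount _ _.
move=> h.
have E0 : ((\prod_ab (eta ab)`!)%:R : rat) != 0%R.
  by rewrite pnatr_eq0 -lt0n prodn_gt0 // => ab; exact: fact_gt0.
have ep : (\prod_b (\prod_a ((eta (a, b))`!)%:R) : rat)%R =
          ((\prod_ab (eta ab)`!)%N%:R)%R.
  rewrite exchange_big pair_bigA natr_prod /=; apply: eq_bigr => -[a b] _ //.
rewrite prodf_div ep; apply: (mulIf E0).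
rewrite -!mulrA mulVf // mulr1 -natrM h !natrM !natr_prod !mulrA.
by [].
Qed.

Theorem mainTheorem4 :
  (forall (F : finFieldType) (n : nat) (C D : {set 'rV[F]_n}) (eta : {ffun F * F -> nat}),
      Fq_linear C -> Fq_linear D -> is_bicomposition n eta ->
      identity_holds C D eta)
  /\
  (forall (k : nat), 1 < k ->
   forall (n : nat) (C D : {set 'rV['Z_k]_n}) (eta : {ffun 'Z_k * 'Z_k -> nat}),
      Zk_linear C -> Zk_linear D -> is_bicomposition n eta ->
      identity_holds C D eta).
Proof.
split.
  by move=> F n C D eta _ _ hE; apply: (gen_identity 0%R).
by move=> k _ n C D eta _ _ hE; apply: (gen_identity 0%R).
Qed.
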